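(* Let $1<\alpha<2$ and let $N\ge 3$ be an integer. Define, for $1\le i\le N-1$, $$\widetilde b_{i,i}=2\big[(i+1)^{3-\alpha}-2(3-\alpha)i^{2-\alpha}-(i-1)^{3-\alpha}\big]+2\big[(N-i+1)^{3-\alpha}-2(3-\alpha)(N-i)^{2-\alpha}-(N-i-1)^{3-\alpha}\big],$$ and for $1\le i\le N-2$, $$\widetilde b_{i,i+1}=-2\big[(i+1)^{3-\alpha}-i^{3-\alpha}\big]+(3-\alpha)\big[(i+1)^{2-\alpha}+i^{2-\alpha}\big]-2\big[(N-i)^{3-\alpha}-(N-i-1)^{3-\alpha}\big]+(3-\alpha)\big[(N-i)^{2-\alpha}+(N-i-1)^{2-\alpha}\big].$$ Let $B_h=(b_{i,j})_{i,j=1}^{N-1}$ be the symmetric matrix with $b_{i,i}=8-2^{4-\alpha}+\widetilde b_{i,i}$ ($1\le i\le N-1$), $b_{i,i+1}=b_{i+1,i}=-7-3^{3-\alpha}+2^{5-\alpha}+\widetilde b_{i,i+1}$ ($1\le i\le N-2$), and, for $m=|j-i|\ge 2$, $$b_{i,j}=-(m+2)^{3-\alpha}+4(m+1)^{3-\alpha}-6m^{3-\alpha}+4(m-1)^{3-\alpha}-(m-2)^{3-\alpha}.$$ Then: (1) $b_{i,j}<0$ for all $j\neq i$, $\widetilde b_{i,i+1}<0$ for $1\le i\le N-2$, and $\widetilde b_{i,i}<0$ for $1\le i\le N-1$; (2) for every $1\le i\le N-1$, $\sum_{j=1}^{N-1}b_{i,j}>0$ and $b_{i,i}>\sum_{j\neq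 i}|b_{i,j}|>0$.
   Context: Here $0^{p}=0$ for $p>0$. The matrix $B_h$ is (up to the positive factor $\kappa_\alpha/(h^{\alpha-1}\Gamma(4-\alpha))$, $\kappa_\alpha=-1/(2\cos(\alpha\pi/2))$, $h=b/N$) the stiffness matrix of the piecewise linear finite element discretization on the uniform mesh $x_i=ih$ of $(0,b)$ of the one-dimensional fractional Laplacian $C_\alpha\int_{0}^{b}\frac{u(x)-u(y)}{|x-y|^{1+\alpha}}dy$ with zero exterior condition. *)

(* Defs.v *)
(* R : realType, real powers via powR (a `^ x),
   which satisfies 0 `^ p = 0 for p <> 0, matching the paper's 0^p = 0. *)
From mathcomp Require Import all_boot all_order all_algebra.
From mathcomp Require Import all_classical all_reals all_analysis.
Set Implicit Arguments. Unset Strict Implicit. Unset Printing Implicit Defensive.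
Import Order.TTheory GRing.Theory Num.Theory.
Local Open Scope ring_scope.

Section Bh.
Variable R : realType.

Definition pn (n : nat) (p : R) : R := (n%:R) `^ p.

Definition btil_diag (a : R) (N i : nat) : R :=
  2 * (pn i.+1 (3 - a) - 2 * (3 - a) * pn i (2 - a) - pn i.-1 (3 - a))
  + 2 * (pn (N - i).+1 (3 - a) - 2 * (3 - a) * pn (N - i) (2 - a)
         - pn (N - i - 1) (3 - a)).

Definition btil_off (a : R) (N i : nat) : R :=
  - 2 * (pn i.+1 (3 - a) - pn i (3 - a))
  + (3 - a) * (pn i.+1 (2 - a) + pn i (2 - a))
  - 2 * (pn (N - i) (3 - a) - pn (N - i - 1) (3 - a))
  + (3 - a) * (pn (N - i) (2 - a) + pn (N - i - 1) (2 - a)).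

Definition bfar (a : R) (m : nat) : R :=
  - pn m.+2 (3 - a) + 4 * pn m.+1 (3 - a) - 6 * pn m (3 - a)
  + 4 * pn m.-1 (3 - a) - pn (m - 2) (3 - a).

Definition bmat (a : R) (N i j : nat) : R :=
  if i == j then 8 - 2 `^ (4 - a) + btil_diag a N i
  else if j == i.+1 then - 7 - 3 `^ (3 - a) + 2 `^ (5 - a) + btil_off a N i
  else if i == j.+1 then - 7 - 3 `^ (3 - a) + 2 `^ (5 - a) + btil_off a N j
  else bfar a (if i < j then j - i else i - j)%N.

End Bh.

(* Main.v *)
Require Import Defs.
From mathcomp Require Import all_boot all_order all_algebra.
From mathcomp Require Import all_classical all_reals all_analysis.
From mathcomp Require Import zify ring lra.
Import Order.TTheory GRing.Theory Num.Theory.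
Local Open Scope ring_scope.

Section A.
Import numFieldNormedType.Exports.
Local Open Scope classical_set_scope.
Variable R : realType.
Implicit Types x y u v q r : R.

Lemma cont_of_derive (f : R -> R) x df : is_derive x 1 f df -> {for x, continuous f}.
Proof. by move=> [d _]; exact/differentiable_continuous/derivable1_diffP. Qed.

Lemma within_of_derive (f df : R -> R) a b :
  (forall x, a <= x <= b -> is_derive x 1 f (df x)) -> {within `[a, b], continuous f}.
Proof.
move=> H; apply: continuous_in_subspaceT => x; rewrite inE /= in_itv /= => /H.
exact: cont_of_derive.
Qed.

Lemma pow_mvt q u v : 0 < u -> u < v ->
  exists2 c, u < c < v & v `^ q - u `^ q = q * c `^ (q - 1) * (v - u).
Proof.
move=> u0 uv.
have D : forall x, u <= x -> is_derive x 1 (fun x => x `^ q) (q * x `^ (q - 1)).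
  by move=> x ux; apply: is_derive1_powR; exact: lt_le_trans ux.
have H1 : forall x, x \in `]u, v[%R -> is_derive x 1 (fun x => x `^ q) (q * x `^ (q - 1)).
  by move=> x; rewrite in_itv /= => /andP[ux _]; apply: D; exact: ltW.
have H2 : {within `[u, v], continuous (fun x => x `^ q)}.
  by apply: within_of_derive => x /andP[ux _]; exact: D.
have [c cuv E] := @MVT R (fun x => x `^ q) (fun x => q * x `^ (q - 1)) u v uv H1 H2.
by exists c => //; move: cuv; rewrite in_itv.
Qed.

Lemma pow_decrN r u v : 0 < r -> 0 < u -> u < v -> v `^ (- r) < u `^ (- r).
Proof.
move=> r0 u0 uv; have v0 : 0 < v := lt_trans u0 uv.
rewrite !powRN ltf_pV2 ?posrE ?powR_gt0 //.
by apply: gt0_ltr_powR; rewrite // nnegrE ltW.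
Qed.

Lemma pow_decr q u v : q < 0 -> 0 < u -> u < v -> v `^ q < u `^ q.
Proof.
move=> q0 u0 uv; have := @pow_decrN (- q) u v; rewrite opprK; apply => //.
by rewrite oppr_gt0.
Qed.

Lemma K1a q u v : 0 < q -> q < 1 -> 0 < u -> u < v ->
  q * v `^ (q - 1) * (v - u) < v `^ q - u `^ q.
Proof.
move=> q0 q1 u0 uv; have [c /andP[uc cv] ->] := @pow_mvt q u v u0 uv.
rewrite ltr_pM2r ?subr_gt0 // ltr_pM2l //; apply: pow_decr => //.
  by rewrite subr_lt0.
exact: lt_trans uc.
Qed.

Lemma K1b q k s : 0 < q -> q < 1 -> 0 < s -> s < k ->
  (k + s) `^ q + (k - s) `^ q < 2 * k `^ q.
Proof.
move=> q0 q1 s0 sk.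
have ks0 : 0 < k - s by rewrite subr_gt0.
have k0 : 0 < k := lt_trans s0 sk.
have h1 : k - s < k by rewrite ltrBlDr ltrDl.
have [c2 /andP[c2a c2b] E2] := @pow_mvt q (k - s) k ks0 h1.
have h2 : k < k + s by rewrite ltrDl.
have [c1 /andP[c1a c1b] E1] := @pow_mvt q k (k + s) k0 h2.
have : (k + s) `^ q - k `^ q < k `^ q - (k - s) `^ q.
  have e1 : k + s - k = s by ring.
  have e2 : k - (k - s) = s by ring.
  rewrite E1 E2 e1 e2.
  rewrite ltr_pM2r // ltr_pM2l //; apply: pow_decr; rewrite ?subr_lt0 //.
    exact: lt_trans ks0 c2a.
  exact: lt_trans c2b c1a.
lra.
Qed.

Lemma K2 q u : q < 0 -> 0 < u ->
  0 < (u + 2) `^ q - 2 * (u + 1) `^ q + u `^ q.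
Proof.
move=> q0 u0.
have u10 : 0 < u + 1 by rewrite ltr_wpDr.
have h1 : u < u + 1 by rewrite ltrDl.
have [c2 /andP[c2a c2b] E2] := @pow_mvt q u (u + 1) u0 h1.
have h2 : u + 1 < u + 2 by rewrite ltrD2l ltr1n.
have [c1 /andP[c1a c1b] E1] := @pow_mvt q (u + 1) (u + 2) u10 h2.
have : q * c2 `^ (q - 1) < q * c1 `^ (q - 1).
  rewrite ltr_nM2l //; apply: pow_decr; rewrite ?subr_lt0 ?(lt_trans q0) //.
    exact: lt_trans u0 c2a.
  exact: lt_trans c2b c1a.
have e1 : u + 2 - (u + 1) = 1 by ring.
have e2 : u + 1 - u = 1 by ring.
rewrite e1 in E1; rewrite e2 in E2.
lra.
Qed.

Lemma near_dist (x e : R) : 0 < e -> \forall y \near x, `|x - y| < e.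
Proof. by move=> e0; have := @near_ball _ _ x e e0; apply: filterS => y; rewrite /ball /=. Qed.

Lemma Pm_cont r : 0 < r -> continuous (fun x : R => (Num.max x 0) `^ r).
Proof.
move=> r0 x; case: (ltP 0 x) => x0.
  apply: (@continuous_comp _ _ _ (fun y : R => Num.max y 0) (fun t => t `^ r)).
    by apply: continuous_max => //; exact: cvg_cst.
  by apply: cont_of_derive; apply: is_derive1_powR; rewrite lt_max x0.
apply/cvgrPdist_lt => e e0.
have d0 : 0 < e `^ r^-1 by rewrite powR_gt0.
near=> y.
have -> : Num.max x 0 = 0 by apply/max_idPr.
rewrite powR0 ?gt_eqF // sub0r normrN ger0_norm ?powR_ge0 //.
have -> : e = (e `^ r^-1) `^ r by rewrite -powRrM mulVf ?gt_eqF // powRr1 // ltW.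
apply: gt0_ltr_powR; rewrite // ?nnegrE ?le_max ?lexx ?orbT ?powR_ge0 //.
rewrite gt_max d0 andbT.
have : `|x - y| < e `^ r^-1 by near: y; exact: near_dist.
move=> h; have := ler_norm (y - x); rewrite distrC in h. lra.
Unshelve. all: by end_near.
Qed.

Lemma within_pow r al d a b : 0 < r -> (forall y, a <= y <= b -> 0 <= al * y + d) ->
  {within `[a, b], continuous (fun y => (al * y + d) `^ r)}.
Proof.
move=> r0 H.
apply: (@subspace_eq_continuous _ _ _ (fun y => (Num.max (al * y + d) 0) `^ r)).
  move=> y; rewrite inE /= in_itv /= => /H yp.
  by congr (_ `^ _); apply/max_idPl.
apply: continuous_subspaceT => y.
apply: (@continuous_comp _ _ _ (fun y => al * y + d) (fun t => (Num.max t 0) `^ r)).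
  apply: continuousD; last exact: cvg_cst.
  apply: continuousM; first exact: cvg_cst.
  exact: cvg_id.
exact: Pm_cont.
Qed.

Lemma withinD (f g : R -> R) a b : {within `[a, b], continuous f} ->
  {within `[a, b], continuous g} -> {within `[a, b], continuous (fun y => f y + g y)}.
Proof. by move=> cf cg x; exact: (continuousD (cf x) (cg x)). Qed.

Lemma withinM (f : R -> R) c a b : {within `[a, b], continuous f} ->
  {within `[a, b], continuous (fun y => c * f y)}.
Proof. by move=> cf x; have := continuousM (@cst_continuous _ _ c x) (cf x); exact. Qed.

Lemma is_derive_aff al d x : is_derive x 1 (fun y : R => al * y + d) al.
Proof.
have h1 : is_derive x 1 (fun y : R => al * y) al.
  have := @is_deriveZ R R R id al x 1 1 (is_derive_id x 1).
  by rewrite /GRing.scale /= mulr1.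
have := @is_deriveD R R R (fun y => al * y) (fun _ => d) x 1 al 0 h1 (is_derive_cst d x 1).
by rewrite addr0.
Qed.

Lemma is_derive_shpow r al d x : 0 < al * x + d ->
  is_derive x 1 (fun y => (al * y + d) `^ r) (r * (al * x + d) `^ (r - 1) * al).
Proof.
move=> h.
exact: (@is_derive1_comp R (fun t => t `^ r) (fun y => al * y + d) x _ al (is_derive1_powR r h) (is_derive_aff al d x)).
Qed.

Lemma is_derive_sc c (f : R -> R) x df : is_derive x 1 f df ->
  is_derive x 1 (fun z => c * f z) (c * df).
Proof.
move=> h; have := @is_deriveZ R R R f c x 1 df h.
by rewrite /GRing.scale /=.
Qed.

Lemma is_derive_add (f g : R -> R) x df dg : is_derive x 1 f df -> is_derive x 1 g dg ->
  is_derive x 1 (fun z => f z + g z) (df + dg).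
Proof. by move=> h1 h2; exact: (@is_deriveD R R R f g x 1 df dg h1 h2). Qed.

Lemma is_derive_sp r d x : 0 < x + d ->
  is_derive x 1 (fun y => (y + d) `^ r) (r * (x + d) `^ (r - 1)).
Proof.
move=> h.
have e : (fun y => (1 * y + d) `^ r) = (fun y => (y + d) `^ r).
  by apply: funext => y; rewrite mul1r.
have := @is_derive_shpow r 1 d x; rewrite e !mul1r mulr1; apply; exact: h.
Qed.

Lemma within_sp r d a b : 0 < r -> 0 <= a + d ->
  {within `[a, b], continuous (fun y => (y + d) `^ r)}.
Proof.
move=> r0 ad; have := @within_pow r 1 d a b r0.
have -> : (fun y => (1 * y + d) `^ r) = (fun y => (y + d) `^ r).
  by apply: funext => y; rewrite mul1r.
apply => y /andP[ay _]; rewrite mul1r; apply: le_trans ad _; by rewrite lerD2r.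
Qed.

Definition tri (c1 c2 c3 r x : R) := c1 * (x + 1) `^ r + c2 * x `^ r + c3 * (x - 1) `^ r.

Lemma tri_der c1 c2 c3 r y : 1 < y ->
  is_derive y 1 (tri c1 c2 c3 r) (tri (c1 * r) (c2 * r) (c3 * r) (r - 1) y).
Proof.
move=> y1; have y0 : 0 < y by apply: lt_trans y1.
rewrite /tri -!mulrA.
apply: is_derive_add; first apply: is_derive_add.
- by apply: is_derive_sc; apply: is_derive_sp; rewrite ltr_wpDr.
- by apply: is_derive_sc; apply: is_derive1_powR.
- by apply: is_derive_sc; apply: is_derive_sp; rewrite subr_gt0.
Qed.

Lemma tri_cont c1 c2 c3 r a b : 0 < r -> 1 <= a ->
  {within `[a, b], continuous (tri c1 c2 c3 r)}.
Proof.
move=> r0 a1; have a0 : 0 < a by apply: lt_le_trans a1.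
apply: withinD; first apply: withinD.
- by apply: withinM; apply: within_sp => //; rewrite ltW // ltr_wpDr // ltW.
- apply: withinM; have := @within_sp r 0 a b r0; rewrite addr0.
  have -> : (fun y => (y + 0) `^ r) = (fun y => y `^ r) by apply: funext => y; rewrite addr0.
  by apply; rewrite ltW.
- by apply: withinM; apply: within_sp => //; rewrite subr_ge0.
Qed.

Lemma tri_mvt c1 c2 c3 r a b : 0 < r -> 1 <= a -> a < b ->
  exists2 c, a < c < b &
   tri c1 c2 c3 r b - tri c1 c2 c3 r a = tri (c1 * r) (c2 * r) (c3 * r) (r - 1) c * (b - a).
Proof.
move=> r0 a1 ab.
have H1 : forall x, x \in `]a, b[%R ->
   is_derive x 1 (tri c1 c2 c3 r) (tri (c1 * r) (c2 * r) (c3 * r) (r - 1) x).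
  by move=> x; rewrite in_itv /= => /andP[ax _]; apply: tri_der; exact: le_lt_trans ax.
have [c cab E] := MVT ab H1 (@tri_cont c1 c2 c3 r a b r0 a1).
by exists c => //; move: cab; rewrite in_itv.
Qed.

Lemma is_derive_sub (f g : R -> R) x df dg : is_derive x 1 f df -> is_derive x 1 g dg ->
  is_derive x 1 (fun z => f z - g z) (df - dg).
Proof. by move=> h1 h2; exact: (@is_deriveB R R R f g x 1 df dg h1 h2). Qed.

Lemma is_derive_mul (f g : R -> R) x df dg : is_derive x 1 f df -> is_derive x 1 g dg ->
  is_derive x 1 (fun z => f z * g z) (f x * dg + g x * df).
Proof. by move=> h1 h2; exact: (@is_deriveM R R f g x 1 df dg h1 h2). Qed.

Lemma withinB (f g : R -> R) a b : {within `[a, b], continuous f} ->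
  {within `[a, b], continuous g} -> {within `[a, b], continuous (fun y => f y - g y)}.
Proof. by move=> cf cg x; exact: (continuousB (cf x) (cg x)). Qed.

Lemma mvt01 (f df : R -> R) : (forall x, 0 < x < 1 -> is_derive x 1 f (df x)) ->
  {within `[0, 1], continuous f} -> exists2 c, 0 < c < 1 & f 1 - f 0 = df c.
Proof.
move=> H1 H2.
have H1' : forall x, x \in `]0, 1[%R -> is_derive x 1 f (df x).
  by move=> x; rewrite in_itv /=; exact: H1.
have [c cab E] := MVT ltr01 H1' H2.
by exists c; [move: cab; rewrite in_itv | rewrite E subr0 mulr1].
Qed.

Section P.
Variable p : R.
Hypothesis p1 : 1 < p.
Hypothesis p2 : p < 2.

Let p0 : 0 < p. Proof. by apply: lt_trans p1. Qed.
Let pm10 : 0 < p - 1. Proof. by rewrite subr_gt0. Qed.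

Definition phi := tri 1 (-2) 1 p.
Definition hh := tri p (-2 * p) p (p - 1).

Lemma hh_incr x y : 1 <= x -> x < y -> hh x < hh y.
Proof.
move=> x1 xy; rewrite -subr_gt0 /hh.
have [c /andP[xc cy] ->] := @tri_mvt p (-2 * p) p (p - 1) x y pm10 x1 xy.
rewrite pmulr_lgt0 ?subr_gt0 // /tri.
have c1 : 0 < c - 1 by rewrite subr_gt0; apply: le_lt_trans xc.
have := @K2 (p - 1 - 1) (c - 1) _ c1.
have -> : c - 1 + 2 = c + 1 by ring.
have -> : c - 1 + 1 = c by ring.
have q0 : p - 1 - 1 < 0.
have := p2. lra.
move=> h; have h' := h q0.
have pp : 0 < p * (p - 1) by rewrite mulr_gt0.
have := mulr_gt0 pp h'.
move=> H; apply: (lt_le_trans H); rewrite le_eqVlt; apply/orP; left; apply/eqP; ring.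
Qed.

Lemma phi_mvt a b : 1 <= a -> a < b ->
  exists2 c, a < c < b & phi b - phi a = hh c * (b - a).
Proof.
move=> a1 ab; have [c cab E] := @tri_mvt 1 (-2) 1 p a b p0 a1 ab.
by exists c => //; rewrite /phi E /hh !mul1r.
Qed.

Lemma delta4 M : 2 <= M -> 0 < phi (M + 1) - 2 * phi M + phi (M - 1).
Proof.
move=> M2.
have a1 : 1 <= M - 1 by have := M2; lra.
have l1 : M - 1 < M by lra.
have l2 : M < M + 1 by lra.
have M1 : 1 <= M by have := M2; lra.
have [c1 /andP[c1a c1b] E1] := @phi_mvt (M - 1) M a1 l1.
have [c2 /andP[c2a c2b] E2] := @phi_mvt M (M + 1) M1 l2.
have h : hh c1 < hh c2.
  apply: hh_incr; first by have := a1; have := c1a; lra.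
  exact: lt_trans c1b c2a.
have e1 : M - (M - 1) = 1 by ring.
have e2 : M + 1 - M = 1 by ring.
rewrite e1 mulr1 in E1; rewrite e2 mulr1 in E2.
lra.
Qed.

Lemma Hpos K : 2 <= K -> 0 < hh K - (phi K - phi (K - 1)).
Proof.
move=> K2.
have a1 : 1 <= K - 1 by have := K2; lra.
have l1 : K - 1 < K by lra.
have [c1 /andP[c1a c1b] E1] := @phi_mvt (K - 1) K a1 l1.
have h : hh c1 < hh K.
  by apply: hh_incr => //; have := a1; have := c1a; lra.
have e1 : K - (K - 1) = 1 by ring.
rewrite e1 mulr1 in E1.
lra.
Qed.

Lemma pow1 r : (1 : R) `^ r = 1.
Proof. by rewrite powR1. Qed.

Lemma pow0 r : r != 0 -> (0 : R) `^ r = 0.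
Proof. exact: powR0. Qed.

Lemma two_pow_le : 2 `^ (p - 1) <= (2 : R).
Proof. by apply: ler1_powR; [rewrite ler1n | have := p2; lra]. Qed.

Lemma two_powE : (2 : R) `^ p = 2 * 2 `^ (p - 1).
Proof. by rewrite mulr_powRB1. Qed.

Lemma c1_neg : 0 < 7 + 3 `^ p - 4 * 2 `^ p.
Proof.
have a1 : (1 : R) <= 1 by [].
have l1 : (1 : R) < 2 by rewrite ltr1n.
have [c /andP[ca cb] E] := @phi_mvt 1 2 a1 l1.
have h : hh 1 < hh c by apply: hh_incr.
move: E h; rewrite /phi /hh /tri.
have -> : (2 : R) + 1 = 3 by ring.
have -> : (2 : R) - 1 = 1 by ring.
have -> : (1 : R) + 1 = 2 by ring.
rewrite subrr !pow1 !pow0 ?gt_eqF // two_powE.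
have := two_pow_le; have := p2; have := p1.
set t := 2 `^ (p - 1); set u := 3 `^ p.
move=> *; nra.
Qed.

Definition To K := -2 * ((K + 1) `^ p - K `^ p) + p * ((K + 1) `^ (p - 1) + K `^ (p - 1)).
Definition Td K := 2 * ((K + 1) `^ p - 2 * p * K `^ (p - 1) - (K - 1) `^ p).

Lemma To_neg K : 1 <= K -> To K < 0.
Proof.
move=> K1; have K0 : 0 < K by apply: lt_le_trans K1.
pose chi s := (s + K) `^ p - K `^ p
   - (2^-1 * s + 0) * (p * K `^ (p - 1) + p * (s + K) `^ (p - 1)).
pose dchi s := p * (s + K) `^ (p - 1) - 0 - ((2^-1 * s + 0) * (0 + p * ((p - 1) * (s + K) `^ (p - 1 - 1)))
   + (p * K `^ (p - 1) + p * (s + K) `^ (p - 1)) * 2^-1).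
have D : forall s : R, 0 <= s -> is_derive s 1 chi (dchi s).
  move=> s s0; have sK : 0 < s + K by rewrite ltr_wpDl.
  apply: is_derive_sub; first apply: is_derive_sub.
    exact: is_derive_sp.
  apply: is_derive_mul; first exact: is_derive_aff.
  apply: is_derive_add.
  by apply: is_derive_sc; apply: is_derive_sp.
have [c /andP[c0 c1] E] := @mvt01 chi dchi (fun x hx => D x (ltW (proj1 (andP hx))))
  (@within_of_derive chi dchi 0 1 (fun x hx => D x (proj1 (andP hx)))).
have q1 : p - 1 < 1 by have := p2; lra.
have cK : K < c + K by rewrite ltrDr.
have k1 := @K1a (p - 1) K (c + K) pm10 q1 K0 cK.
have e : c + K - K = c by ring.
rewrite e in k1.
move: E; rewrite /chi /dchi /To !add0r (addrC 1 K).
set A := K `^ (p - 1) in k1 *; set B := (c + K) `^ (p - 1) in k1 *.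
set C := (c + K) `^ (p - 1 - 1) in k1 *.
move=> E.
have h : 0 < p * (B - A - (p - 1) * C * c) by apply: mulr_gt0 => //; lra.
nra.
Qed.

Lemma Td_neg K : 1 <= K -> Td K < 0.
Proof.
move=> K1; have K0 : 0 < K by apply: lt_le_trans K1.
pose chi s := (s + K) `^ p - (-1 * s + K) `^ p - (2 * p * K `^ (p - 1) * s + 0).
pose dchi s := p * (s + K) `^ (p - 1) - p * (-1 * s + K) `^ (p - 1) * (-1)
   - 2 * p * K `^ (p - 1).
have D : forall s : R, 0 < s < 1 -> is_derive s 1 chi (dchi s).
  move=> s /andP[s0 s1]; have sK : 0 < s + K by rewrite ltr_wpDl // ltW.
  have sK' : 0 < -1 * s + K by rewrite mulN1r addrC subr_gt0; apply: lt_le_trans K1.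
  apply: is_derive_sub; first apply: is_derive_sub.
  - exact: is_derive_sp.
  - exact: is_derive_shpow.
  exact: is_derive_aff.
have C1 : {within `[0, 1], continuous chi}.
  apply: withinB; first apply: withinB.
  - apply: (@within_of_derive (fun s => (s + K) `^ p) (fun s => p * (s + K) `^ (p - 1))).
    by move=> x /andP[x0 _]; apply: is_derive_sp; rewrite ltr_wpDl.
  - apply: within_pow => // y /andP[_ y1]; rewrite mulN1r addrC subr_ge0.
    exact: le_trans y1 K1.
  apply: (@within_of_derive _ (fun _ => 2 * p * K `^ (p - 1))).
  by move=> x _; exact: is_derive_aff.
have [c /andP[c0 c1] E] := @mvt01 chi dchi D C1.
have q1 : p - 1 < 1 by have := p2; lra.
have cK : c < K by apply: lt_le_trans K1.
have k1 := @K1b (p - 1) K c pm10 q1 c0 cK.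
move: E; rewrite /chi /dchi /Td !mulr0 !addr0 !mulN1r !mulr1 (addrC 1 K) (addrC (-1) K) (addrC (- c) K) (addrC c K) add0r subr0.
set A := K `^ (p - 1) in k1 *; set B := (K + c) `^ (p - 1) in k1 *.
set C := (K - c) `^ (p - 1) in k1 *.
move=> E.
have h : p * (B + C) < p * (2 * A) by rewrite ltr_pM2l.
lra.
Qed.
End P.
End A.

Section B.
Variable R : realType.
Variable a : R.

Definition Tod k := -2 * (pn k.+1 (3 - a) - pn k (3 - a))
  + (3 - a) * (pn k.+1 (2 - a) + pn k (2 - a)).
Definition Tdd k := 2 * (pn k.+1 (3 - a) - 2 * (3 - a) * pn k (2 - a) - pn k.-1 (3 - a)).
Definition Dd m := pn m.+2 (3 - a) - 3 * pn m.+1 (3 - a) + 3 * pn m (3 - a) - pn m.-1 (3 - a).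

Lemma btil_offE N i : (i < N)%N -> btil_off a N i = Tod i + Tod (N - i - 1).
Proof.
move=> iN; rewrite /btil_off /Tod.
have -> : (N - i - 1).+1 = (N - i)%N by lia.
ring.
Qed.

Lemma btil_diagE N i : btil_diag a N i = Tdd i + Tdd (N - i).
Proof.
rewrite /btil_diag /Tdd.
have -> : (N - i - 1 = (N - i).-1)%N by lia.
ring.
Qed.

Lemma bfarE m : (2 <= m)%N -> bfar a m = - (Dd m - Dd m.-1).
Proof.
move=> m2; rewrite /bfar /Dd.
have -> : (m.-1.+2 = m.+1)%N by lia.
have -> : (m.-1.+1 = m)%N by lia.
have -> : (m.-1.-1 = m - 2)%N by lia.
ring.
Qed.

Lemma sum_bfar M : (2 <= M)%N -> \sum_(2 <= m < M) bfar a m = Dd 1 - Dd M.-1.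
Proof.
elim: M => [//|M IH] M2.
case: (ltngtP M 1) => [M1|M1|M1]; first by lia.
- rewrite big_nat_recr //= IH // bfarE //; ring.
- by subst M; rewrite big_geq // subrr.
Qed.

Lemma natrP (k : nat) : (1 <= k)%N -> k.-1%:R = k%:R - 1 :> R.
Proof. by case: k => [//|k] _; rewrite -natr1 addrK. Qed.

Lemma natr2 (k : nat) : (2 <= k)%N -> (k - 2)%:R = k%:R - 2 :> R.
Proof. by move=> k2; rewrite natrB. Qed.

Lemma TodE k : Tod k = To R (3 - a) k%:R.
Proof.
rewrite /Tod /To /pn -[k.+1%:R]natr1.
have -> : 2 - a = 3 - a - 1 by ring.
done.
Qed.

Lemma TddE k : (1 <= k)%N -> Tdd k = Td R (3 - a) k%:R.
Proof.
move=> k1; rewrite /Tdd /Td /pn -[k.+1%:R]natr1 natrP //.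
have -> : 2 - a = 3 - a - 1 by ring.
done.
Qed.


Lemma HdE k : (2 <= k)%N ->
  Tdd k + Tod k + Tod k.-1 - Dd k.-1 =
  hh R (3 - a) k%:R - (phi R (3 - a) k%:R - phi R (3 - a) (k%:R - 1)).
Proof.
move=> k2; rewrite /Tdd /Tod /Dd /hh /phi /tri /pn.
have -> : (k.-1.+2 = k.+1)%N by lia.
have -> : (k.-1.+1 = k)%N by lia.
have -> : (k.-1.-1 = k - 2)%N by lia.
rewrite -[k.+1%:R]natr1 natrP ?natr2 //; last by lia.
have -> : k%:R - 1 + 1 = k%:R :> R by ring.
have -> : k%:R - 1 - 1 = k%:R - 2 :> R by ring.
have -> : 2 - a = 3 - a - 1 by ring.
ring.
Qed.

Lemma bfar_phi m : (2 <= m)%N ->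
  bfar a m = - (phi R (3 - a) (m%:R + 1) - 2 * phi R (3 - a) m%:R + phi R (3 - a) (m%:R - 1)).
Proof.
move=> m2; rewrite /bfar /phi /tri /pn.
rewrite -[m.+2%:R]natr1 -[m.+1%:R]natr1 natrP ?natr2 //; last by lia.
have -> : m%:R + 1 - 1 = m%:R :> R by ring.
have -> : m%:R - 1 - 1 = m%:R - 2 :> R by ring.
have -> : m%:R + 1 + 1 = m%:R + 2 :> R by ring.
have -> : m%:R - 1 + 1 = m%:R :> R by ring.
ring.
Qed.

Definition c0 := 8 - 2 `^ (4 - a) : R.
Definition c1 := - 7 - 3 `^ (3 - a) + 2 `^ (5 - a) : R.

Lemma pow2add (r : R) (n : nat) : 2 `^ (n%:R + r) = 2 ^+ n * 2 `^ r.
Proof. by rewrite powRD ?pnatr_eq0 ?implybT // powR_mulrn. Qed.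

Lemma c0E : c0 = 8 - 2 * 2 `^ (3 - a).
Proof.
rewrite /c0; have -> : 4 - a = 1%:R + (3 - a) by ring.
by rewrite pow2add expr1.
Qed.

Lemma c1E : c1 = - (7 + 3 `^ (3 - a) - 4 * 2 `^ (3 - a)).
Proof.
rewrite /c1; have -> : 5 - a = 2%:R + (3 - a) by ring.
rewrite pow2add; have -> : (2 : R) ^+ 2 = 4 by rewrite expr2; ring.
ring.
Qed.

Lemma Dd1E : a < 2 -> Dd 1 = 3 `^ (3 - a) - 3 * 2 `^ (3 - a) + 3.
Proof.
move=> a2; rewrite /Dd /pn /= powR1 powR0; last by rewrite subr_eq0; apply/eqP; lra.
ring.
Qed.


Lemma sum_g (g : nat -> R) X M : (1 <= M)%N -> ((2 <= M)%N -> g 1%N = X) ->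
  (forall m, (2 <= m)%N -> (m < M)%N -> g m = bfar a m) ->
  \sum_(1 <= m < M) g m = if (2 <= M)%N then X + (Dd 1 - Dd M.-1) else 0.
Proof.
move=> M1 HX Hg; case: (ltnP 1 M) => M2.
  rewrite big_ltn // HX // -sum_bfar //; congr (_ + _).
  by apply: eq_big_nat => m /andP[m2 mM]; apply: Hg.
by rewrite big_geq.
Qed.

Lemma rowsumE N i : (1 <= i)%N -> (i < N)%N ->
  \sum_(1 <= j < N) bmat a N i j = c0 + btil_diag a N i
  + (if (2 <= i)%N then c1 + btil_off a N i.-1 + (Dd 1 - Dd i.-1) else 0)
  + (if (2 <= N - i)%N then c1 + btil_off a N i + (Dd 1 - Dd (N - i).-1) else 0).
Proof.
move=> i1 iN.
rewrite (big_cat_nat _ (n:=i)) //=; last by lia.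
rewrite (big_ltn iN).
rewrite -[i.+1]add1n big_addn big_nat_rev /=.
have -> : bmat a N i i = c0 + btil_diag a N i by rewrite /bmat eqxx.
have S1 : \sum_(1 <= m < i) bmat a N i (1 + i - m.+1) =
   (if (2 <= i)%N then c1 + btil_off a N i.-1 + (Dd 1 - Dd i.-1) else 0).
  apply: sum_g => //.
  - move=> _; rewrite /bmat ifF; last by lia.
    rewrite ifF; last by lia.
    rewrite ifT; last by lia.
    by congr (_ + btil_off _ _ _); lia.
  - move=> m m2 mi; rewrite /bmat ifF; last by lia.
    rewrite ifF; last by lia.
    rewrite ifF; last by lia.
    by rewrite ifF; [congr bfar; lia | lia].
have S2 : \sum_(1 <= m < N - i) bmat a N i (m + i) =
   (if (2 <= N - i)%N then c1 + btil_off a N i + (Dd 1 - Dd (N - i).-1) else 0).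
  apply: sum_g.
  - by lia.
  - move=> _; rewrite /bmat ifF; last by lia.
    by rewrite ifT //; lia.
  - move=> m m2 mN; rewrite /bmat ifF; last by lia.
    rewrite ifF; last by lia.
    rewrite ifF; last by lia.
    by rewrite ifT; [congr bfar; lia | lia].
by rewrite S1 S2 addrA; congr (_ + _); rewrite addrC.
Qed.

Hypothesis a1 : 1 < a.
Hypothesis a2 : a < 2.

Let p1 : 1 < 3 - a. Proof. by have := a2; lra. Qed.
Let p2 : 3 - a < 2. Proof. by have := a1; lra. Qed.

Lemma E1_pos : 0 < c0 / 2 + Tdd 1 + Tod 1.
Proof.
rewrite c0E /Tdd /Tod /pn /= powR1 powR0; last by rewrite subr_eq0; apply/eqP; have := a2; lra.
have t2 := @two_pow_le R (3 - a) p2.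
have e : 3 - a - 1 = 2 - a by ring.
rewrite e in t2.
have -> : 2%:R `^ (3 - a) = 2 * 2 `^ (2 - a) :> R.
  have -> : 3 - a = 1%:R + (2 - a) by ring.
  by rewrite pow2add expr1.
move: t2; set t := 2 `^ (2 - a).
have := a1; have := a2. move=> *. nra.
Qed.

Lemma Tod_neg k : (1 <= k)%N -> Tod k < 0.
Proof. by move=> k1; rewrite TodE; apply: To_neg => //; rewrite ler1n. Qed.

Lemma Tdd_neg k : (1 <= k)%N -> Tdd k < 0.
Proof. by move=> k1; rewrite TddE //; apply: Td_neg => //; rewrite ler1n. Qed.

Lemma bfar_neg m : (2 <= m)%N -> bfar a m < 0.
Proof.
move=> m2; rewrite bfar_phi // oppr_lt0; apply: delta4 => //.
by rewrite (ler_nat R 2 m).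
Qed.

Lemma Hk_pos k : (2 <= k)%N -> 0 < Tdd k + Tod k + Tod k.-1 - Dd k.-1.
Proof.
move=> k2; rewrite HdE //; apply: Hpos => //.
by rewrite (ler_nat R 2 k).
Qed.

Lemma c1_lt0 : c1 < 0.
Proof. by rewrite c1E oppr_lt0; apply: c1_neg. Qed.

Lemma c_zero : c0 / 2 + c1 + Dd 1 = 0.
Proof. rewrite c0E c1E Dd1E //; lra. Qed.

Lemma rowsum_pos N i : (3 <= N)%N -> (1 <= i)%N -> (i < N)%N ->
  0 < \sum_(1 <= j < N) bmat a N i j.
Proof.
move=> N3 i1 iN; rewrite rowsumE // btil_diagE.
have cz := c_zero; have E1 := E1_pos.
case: (ltnP 1 i) => i2; case: (ltnP 1 (N - i)) => n2.
- rewrite !btil_offE //; try lia.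
  have -> : (N - i.-1 - 1 = N - i)%N by lia.
  have -> : (N - i - 1 = (N - i).-1)%N by lia.
  have h1 := @Hk_pos i i2; have h2 := @Hk_pos (N - i) n2.
  lra.
- have -> : (N - i = 1)%N by lia.
  rewrite !btil_offE //; try lia.
  have -> : (N - i.-1 - 1 = 1)%N by lia.
  have h1 := @Hk_pos i i2; have h2 := @Tod_neg i (ltnW i2).
  simpl; lra.
- have -> : i = 1%N by lia.
  rewrite !btil_offE //; try lia.
  have -> : (N - 1 - 1 = (N - 1).-1)%N by lia.
  have h1 : (2 <= N - 1)%N by lia.
  have h2 := @Hk_pos (N - 1) h1; have h3 := @Tod_neg (N - 1) (ltnW h1).
  simpl; lra.
- lia.
Qed.

Lemma btil_off_neg N i : (1 <= i)%N -> (i <= N - 2)%N -> btil_off a N i < 0.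
Proof.
move=> i1 iN; rewrite btil_offE; last by lia.
have h1 := @Tod_neg i i1.
have h2 : (1 <= N - i - 1)%N by lia.
have h3 := @Tod_neg _ h2.
lra.
Qed.

Lemma btil_diag_neg N i : (1 <= i)%N -> (i <= N - 1)%N -> btil_diag a N i < 0.
Proof.
move=> i1 iN; rewrite btil_diagE.
have h1 := @Tdd_neg i i1.
have h2 : (1 <= N - i)%N by lia.
have h3 := @Tdd_neg _ h2.
lra.
Qed.

Lemma bmat_neg N i j : (1 <= i <= N - 1)%N -> (1 <= j <= N - 1)%N -> i <> j ->
  bmat a N i j < 0.
Proof.
move=> /andP[i1 iN] /andP[j1 jN] ij; have c1n := c1_lt0.
rewrite /bmat ifF; last by apply/eqP.
case: (eqVneq j i.+1) => [ji|ji].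
  have := @btil_off_neg N i i1 ltac:(lia); rewrite /c1 in c1n; lra.
case: (eqVneq i j.+1) => [ij'|ij'].
  have := @btil_off_neg N j j1 ltac:(lia); rewrite /c1 in c1n; lra.
by apply: bfar_neg; case: ifP; lia.
Qed.

End B.

Theorem lemma3p3 (R : realType) (a : R) (N : nat) :
  1 < a -> a < 2 -> (3 <= N)%N ->
  ((forall i j : nat, (1 <= i <= N - 1)%N -> (1 <= j <= N - 1)%N -> i <> j ->
      bmat a N i j < 0)
   /\ (forall i : nat, (1 <= i <= N - 2)%N -> btil_off a N i < 0)
   /\ (forall i : nat, (1 <= i <= N - 1)%N -> btil_diag a N i < 0))
  /\
  (forall i : nat, (1 <= i <= N - 1)%N ->
      0 < \sum_(1 <= j < N) bmat a N i j
      /\ \sum_(1 <= j < N | j != i) `|bmat a N i j| < bmat a N i i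
      /\ 0 < \sum_(1 <= j < N | j != i) `|bmat a N i j|).
Proof.
move=> a1 a2 N3; split; first split.
- by move=> i j hi hj ij; apply: bmat_neg.
- split; first by move=> i /andP[i1 iN]; apply: btil_off_neg.
  by move=> i /andP[i1 iN]; apply: btil_diag_neg.
move=> i hi; have /andP[i1 iN] := hi.
have iN' : (i < N)%N by lia.
have Spos := @rowsum_pos R a a1 a2 N i N3 i1 iN'.
have ir : i \in index_iota 1 N by rewrite mem_index_iota; lia.
have U : uniq (index_iota 1 N) by apply: iota_uniq.
have SD : \sum_(1 <= j < N) bmat a N i j =
    bmat a N i i + \sum_(1 <= j < N | j != i) bmat a N i j.
  by rewrite (bigD1_seq i ir U).
have Habs : \sum_(1 <= j < N | j != i) `|bmat a N i j| =
    - \sum_(1 <= j < N | j != i) bmat a N i j.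
  rewrite -sumrN big_seq_cond [RHS]big_seq_cond.
  apply: eq_bigr => j /andP[jr ji].
  rewrite ltr0_norm //; apply: bmat_neg => //; first by move: jr; rewrite mem_index_iota; lia.
  by move=> E; rewrite E eqxx in ji.
split => //; split.
  rewrite Habs; move: Spos; rewrite SD; lra.
pose k := if (i < N - 1)%N then i.+1 else i.-1.
have kr : k \in [seq j <- index_iota 1 N | j != i].
  rewrite mem_filter mem_index_iota /k; case: ifP; lia.
have U' : uniq [seq j <- index_iota 1 N | j != i] by apply: filter_uniq.
rewrite -big_filter (bigD1_seq k kr U') /=.
have bk : bmat a N i k < 0.
  apply: bmat_neg => //; rewrite /k; case: ifP; lia.
have : 0 <= \sum_(j <- [seq j <- index_iota 1 N | j != i] | j != k) `|bmat a N i j|.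
  by apply: sumr_ge0 => j _; exact: normr_ge0.
have : 0 < `|bmat a N i k| by rewrite normr_gt0 ltr0_neq0.
lra.
Qed.
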